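(* Let $M$ be a centrally endo-AIP right $R$-module with $S=\mathrm{End}_R(M)$. If $\mathrm{u.dim}(S_S)=1$, then $S$ is a prime ring.
   Context: For $N\le M$, $l_S(N)=\{\phi\in S:\phi(N)=0\}$. An ideal $I$ of $S$ is centrally s-unital if for every $a\in I$ there is $z\in I$ central in $S$ with $az=a$. $M$ is centrally endo-AIP if $l_S(N)$ is a centrally s-unital ideal of $S$ for every fully invariant submodule $N$ of $M$. $\mathrm{u.dim}(S_S)=1$ means $S_S$ has uniform dimension $1$ (i.e. $S_S$ is uniform). *)

(* Defs.v *)
From mathcomp Require Import all_boot all_order all_algebra.
Set Implicit Arguments. Unset Strict Implicit. Unset Printing Implicit Defensive.
Import GRing.Theory.
Local Open Scope ring_scope.

(* A right R-module M is modelled as a left module over the converse ring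
   [R^c] (= R^op): the scalar action [r *: m] stands for [m r]. *)

Section EndoAIP.
Variables (R : nzRingType) (M : lmodType R^c).

Definition is_endo (f : M -> M) : Prop :=
  (forall x y, f (x + y) = f x + f y) /\ (forall (r : R^c) x, f (r *: x) = r *: f x).

Definition endo_mul (f g : M -> M) : M -> M := fun m => f (g m).
Definition endo_zero : M -> M := fun _ => 0.
Definition endo_eq (f g : M -> M) : Prop := forall m, f m = g m.

Definition is_submodule (N : M -> Prop) : Prop :=
  [/\ N 0, (forall x y, N x -> N y -> N (x + y)), (forall x, N x -> N (- x))
    & (forall (r : R^c) x, N x -> N (r *: x))].

Definition fully_invariant (N : M -> Prop) : Prop :=
  is_submodule N /\ forall f, is_endo f -> forall m, N m -> N (f m).

Definition lS (N : M -> Prop) (f : M -> M) : Prop :=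
  is_endo f /\ forall m, N m -> f m = 0.

Definition is_right_ideal (I : (M -> M) -> Prop) : Prop :=
  [/\ (forall a, I a -> is_endo a), I endo_zero,
      (forall a b, I a -> I b -> I (fun m => a m + b m)),
      (forall a, I a -> I (fun m => - a m))
    & (forall a s, I a -> is_endo s -> I (endo_mul a s))].

Definition is_ideal (I : (M -> M) -> Prop) : Prop :=
  is_right_ideal I /\ (forall a s, I a -> is_endo s -> I (endo_mul s a)).

Definition central_in_S (z : M -> M) : Prop :=
  is_endo z /\ forall s, is_endo s -> endo_eq (endo_mul z s) (endo_mul s z).

Definition centrally_s_unital (I : (M -> M) -> Prop) : Prop :=
  is_ideal I /\
  forall a, I a -> exists z, [/\ I z, central_in_S z & endo_eq (endo_mul a z) a].

Definition centrally_endo_AIP : Prop :=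
  forall N, fully_invariant N -> centrally_s_unital (lS N).

Definition nonzero_set (I : (M -> M) -> Prop) : Prop :=
  exists a, I a /\ ~ endo_eq a endo_zero.

(* u.dim(S_S) = 1, i.e. S_S is uniform: S_S <> 0 and any two nonzero
   submodules (= right ideals) of S_S intersect nontrivially. *)
Definition S_uniform : Prop :=
  nonzero_set is_endo /\
  forall A B, is_right_ideal A -> is_right_ideal B -> nonzero_set A -> nonzero_set B ->
    nonzero_set (fun a => A a /\ B a).

Definition S_prime : Prop :=
  nonzero_set is_endo /\
  forall A B, is_ideal A -> is_ideal B ->
    (forall a b, A a -> B b -> endo_eq (endo_mul a b) endo_zero) ->
    ~ nonzero_set A \/ ~ nonzero_set B.

End EndoAIP.

(* Main.v *)
Require Import Defs.
From mathcomp Require Import all_boot all_order all_algebra.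
From Stdlib Require Import Classical.
Import GRing.Theory.
Local Open Scope ring_scope.

Lemma endo0 (R : nzRingType) (M : lmodType R^c) (f : M -> M) :
  is_endo f -> f 0 = 0.
Proof.
case=> Hadd _; have H := Hadd 0 0; rewrite addr0 in H.
by apply: (addrI (f 0)); rewrite addr0 -H.
Qed.

Lemma endoN (R : nzRingType) (M : lmodType R^c) (f : M -> M) x :
  is_endo f -> f (- x) = - f x.
Proof.
move=> Hf; have H0 := @endo0 _ _ _ Hf; case: Hf => Hadd _.
by apply: (addrI (f x)); rewrite -Hadd !subrr H0.
Qed.

Theorem corollary3p8 (R : nzRingType) (M : lmodType R^c) :
  centrally_endo_AIP M -> S_uniform M -> S_prime M.
Proof.
move=> HA [Hnz Hu]; split => // A B HAi HBi HAB.
case: (classic (nonzero_set A)) => [nA|]; last by left.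
case: (classic (nonzero_set B)) => [nB|]; last by right.
exfalso.
have [c [[cA cB] cnz]] := Hu A B (proj1 HAi) (proj1 HBi) nA nB.
have [[Aendo _ _ _ Aright] _] := HAi.
pose N := fun m : M => forall a, A a -> a m = 0.
have FN : fully_invariant N.
  split.
    split.
    - by move=> a /Aendo /(@endo0 _ _ _).
    - move=> x y Hx Hy a Ha; have [Hadd _] := Aendo a Ha.
      by rewrite Hadd Hx // Hy // addr0.
    - by move=> x Hx a Ha; rewrite (@endoN _ _ _ _ (Aendo a Ha)) Hx // oppr0.
    - move=> r x Hx a Ha; have [_ Hs] := Aendo a Ha.
      by rewrite Hs Hx // scaler0.
  move=> f Hf m Hm a Ha; exact: (Hm _ (Aright a f Ha Hf)).
have [_ Hz] := HA N FN.
have cN : lS N c by split; [exact: Aendo | move=> m Hm; exact: Hm].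
have [z [[_ zN] [_ zc] czc]] := Hz c cN.
apply: cnz => m.
rewrite /endo_zero -czc /endo_mul.
have := zc c (Aendo c cA) m; rewrite /endo_mul => <-.
apply: zN => a Ha; exact: (HAB a c Ha cB m).
Qed.
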